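(* Let $f(X)=X^4+2$. Assume that $|S^2(f,T)|=o(T)$ as $T\to\infty$. Then the set of $d\in\mathbb{N}$ such that $f(d)$ is square-free has a natural density, this density is positive, and it equals $\prod_p\left(1-\frac{\delta_f(p^2)}{p^2}\right)$, where $\delta_f(N)=|\{a\bmod N: f(a)\equiv 0\pmod N\}|$.
   Context: For a natural number $n$, $R_f(n):=\min\{|d|: d\in\mathbb{Z},\ n\mid f(d)\}$ if such $d$ exists, and $R_f(n)=\infty$ otherwise. For real $T$, $S^2(f,T):=\{p \text{ prime}: R_f(p^2)\le T\}$. *)

(* Defs.v *)
From HB Require Import structures.
From mathcomp Require Import all_boot all_order all_algebra.
From mathcomp Require Import all_classical all_reals all_analysis.
Set Implicit Arguments. Unset Strict Implicit. Unset Printing Implicit Defensive.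
Import Order.TTheory GRing.Theory Num.Theory.
Local Open Scope ring_scope.

Definition f (d : int) : int := d ^+ 4 + 2.

Definition Rf_at (n m : nat) : bool :=
  ((n%:Z %| f m%:Z)%Z || (n%:Z %| f (- m%:Z))%Z).

(* R_f(n) = min{|d| : n | f(d)}, with None standing for +infinity *)
Definition Rf (n : nat) : option nat :=
  match pselect (exists m, Rf_at n m) with
  | left h => Some (ex_minn h)
  | right _ => None
  end.

Definition inS2 {R : realType} (T : R) (p : nat) : bool :=
  prime p && (if Rf (p ^ 2)%N is Some r then (r%:R <= T) else false).

(* |S^2(f,T)|.  Every p in S^2(f,T) satisfies p^2 <= m^4+2 for some integer
   m <= T, hence p < truncn(T)^4 + 3; so counting below that bound counts
   the whole (finite) set. *)
Definition S2card {R : realType} (T : R) : nat :=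
  #|[set p : 'I_((Num.truncn T) ^ 4 + 3)%N | inS2 T p]|.

Definition squarefree (n : nat) : bool :=
  (0 < n)%N && [forall k : 'I_n.+1, (1 < k)%N ==> ~~ ((k ^ 2 %| n)%N)].

Definition sqfree_count (N : nat) : nat :=
  count (fun d => squarefree (d ^ 4 + 2)%N) (iota 1 N).

Definition delta (N : nat) : nat :=
  #|[set a : 'I_N | (N %| (a ^ 4 + 2))%N]|.

(* Main.v *)
Require Import Defs.
From HB Require Import structures.
From mathcomp Require Import all_boot all_order all_algebra.
From mathcomp Require Import all_classical all_reals all_analysis.
From mathcomp Require Import zify ring lra.
Import Order.TTheory GRing.Theory Num.Theory.
Import numFieldNormedType.Exports.
Local Open Scope classical_set_scope.
Local Open Scope ring_scope.
Definition F (x : nat) : nat := (x ^ 4 + 2)%N.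

Lemma Fp0 p n : prime p -> ((n%:R : 'F_p) == 0) = (p %| n)%N.
Proof. move=> pr; rewrite -val_eqE /= val_Fp_nat //. Qed.

Lemma roots_le4 p : prime p -> (#|[set x : 'F_p | (x ^+ 4 + 2%:R == 0)%R]%SET| <= 4)%N.
Proof.
move=> pr; set P : {poly 'F_p} := 'X^4 + (2%:R)%:P.
have Pn0 : P != 0 by rewrite -size_poly_eq0 size_XnaddC.
have := max_poly_roots (rs := enum [set x : 'F_p | x ^+ 4 + 2%:R == 0]%SET) Pn0 _ (enum_uniq _).
rewrite size_XnaddC // -cardE; apply.
by apply/allP => x; rewrite mem_enum inE /root /P hornerD hornerXn hornerC.
Qed.

Lemma p_ndvd2 p : prime p -> p != 2%N -> ~~ (p %| 2)%N.
Proof. by move=> pr p2; rewrite dvdn_prime2. Qed.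

Lemma p_ndvd4 p : prime p -> p != 2%N -> ~~ (p %| 4)%N.
Proof. by move=> pr p2; rewrite (_ : 4 = 2 ^ 2)%N // Euclid_dvdX // andbT dvdn_prime2. Qed.

Lemma diff4 a b : (b <= a)%N -> (F a - F b = (a - b) * (a^3 + a^2*b + a*b^2 + b^3))%N.
Proof.
move=> le; rewrite /F subnDr; rewrite -{1 2 3 4 5}(subnK le); set k := (a - b)%N.
rewrite [((k + b) ^ 4)%N](_ : _ = (k * ((k + b) ^ 3 + (k + b) ^ 2 * b + (k + b) * b ^ 2 + b ^ 3)) + b ^ 4)%N ?addnK //.
ring.
Qed.

Lemma natF_mod p a b : prime p -> (a %% p = b %% p)%N -> (a%:R : 'F_p) = b%:R.
Proof. by move=> pr E; rewrite -Fp_nat_mod // E Fp_nat_mod. Qed.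

Lemma hensel p a b : prime p -> p != 2%N -> (p^2 %| F a)%N -> (p^2 %| F b)%N ->
  (a %% p = b %% p)%N -> (a < p^2)%N -> (b < p^2)%N -> a = b.
Proof.
move=> pr p2.
wlog le: a b / (b <= a)%N.
  move=> W Da Db E la lb; case: (leqP b a) => h; first exact: W.
  by symmetry; apply: W => //; apply: ltnW.
move=> Da Db E la lb.
set s := (a^3 + a^2*b + a*b^2 + b^3)%N.
have Dp : (p %| a - b)%N by rewrite -eqn_mod_dvd // E.
have pa : (p %| F a)%N by apply: dvdn_trans Da; rewrite expnS dvdn_mulr.
have cop : coprime p s.
  rewrite prime_coprime // -Fp0 // /s !natrD !natrM.
  rewrite -(@natF_mod p a b pr E).
  set A : 'F_p := a%:R.
  rewrite (_ : _ + _ = 4%:R * A ^+ 3); last by ring.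
  rewrite mulf_eq0 expf_eq0 /= negb_or Fp0 // p_ndvd4 //=.
  apply/negP => /eqP A0.
  move: pa; rewrite -Fp0 // /F natrD natrX -/A A0 expr0n /= add0r.
  by rewrite Fp0 // (negbTE (p_ndvd2 p pr p2)).
have : (p^2 %| (a - b) * s)%N by rewrite -diff4 // dvdn_sub.
rewrite Gauss_dvdl ?coprimeXl // => D2.
have : (a - b < p^2)%N by apply: leq_ltn_trans la; apply: leq_subr.
case E0 : (a - b)%N => [|k]; first by move=> _; apply/eqP; rewrite eqn_leq le -subn_eq0 E0.
move=> lt; rewrite E0 in D2; have := dvdn_leq (isT : (0 < k.+1)%N) D2; lia.
Qed.

Lemma delta4 : delta 4 = 0%N.
Proof.
rewrite /delta; apply/eqP; rewrite cards_eq0; apply/eqP/setP => x; rewrite !inE.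
by case: x => [[|[|[|[|]]]]] //.
Qed.

Lemma delta_le4 p : prime p -> (delta (p^2) <= 4)%N.
Proof.
move=> pr; have [->|p2] := eqVneq p 2%N; first by rewrite delta4.
set S := [set a : 'I_(p^2) | (p^2 %| a ^ 4 + 2)%N]%SET.
pose phi := fun a : 'I_(p^2) => ((a : nat)%:R : 'F_p).
have inj : {in S &, injective phi}.
  move=> a b; rewrite !inE => Da Db E; apply: val_inj => /=.
  apply: (@hensel p a b pr p2 Da Db) => //.
  by have := congr1 (fun x : 'F_p => nat_of_ord x) E; rewrite /phi /= !val_Fp_nat.
have E : #|phi @: S| = #|S| := card_in_imset inj.
rewrite /delta -/S -E.
apply: (leq_trans _ (roots_le4 p pr)); apply: subset_leq_card; apply/fintype.subsetP => x /imsetP [a].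
rewrite !inE => Da ->; rewrite /phi -natrX -natrD Fp0 //.
by apply: dvdn_trans Da; rewrite expnS dvdn_mulr.
Qed.

Section NT.
Local Open Scope nat_scope.

Lemma Fmod q x : F x %% q = F (x %% q) %% q.
Proof. by rewrite /F -modnDml -modnXm modnDml. Qed.
Lemma dvdF_mod q x : (q %| F x) = (q %| F (x %% q)).
Proof. by rewrite /dvdn Fmod. Qed.
Lemma dvdF_shift q M x : q %| M -> (q %| F (x + M)) = (q %| F x).
Proof. move=> H; rewrite dvdF_mod [in RHS]dvdF_mod -modnDmr (eqP H) addn0 //. Qed.

Definition good z d := all (fun p => prime p ==> ~~ (p^2 %| F d)) (iota 0 z).
Definition gp p := if prime p then p^2 else 1.
Definition Mz z := \prod_(0 <= p < z) gp p.
Definition gq p := if prime p then p^2 - delta (p^2) else 1.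
Definition Qz z := \prod_(0 <= p < z) gq p.

Lemma goodS z d : good z.+1 d = good z d && (prime z ==> ~~ (z^2 %| F d)).
Proof. by rewrite /good -[z.+1]addn1 iotaD all_cat /= andbT. Qed.

Lemma Mz_dvd z p : p < z -> prime p -> p^2 %| Mz z.
Proof.
elim: z => // z IH; rewrite ltnS leq_eqVlt => /orP [/eqP -> | /IH H] pr.
  by rewrite /Mz big_nat_recr //= /gp pr dvdn_mull.
by rewrite /Mz big_nat_recr //= dvdn_mulr ?H.
Qed.

Lemma Mz_gt0 z : 0 < Mz z.
Proof.
elim: z => [|z IH]; first by rewrite /Mz big_geq.
rewrite /Mz big_nat_recr //= muln_gt0 IH /gp; case: ifP => // pr.
by rewrite expn_gt0 prime_gt0.
Qed.

Lemma good_shift z x : good z (x + Mz z) = good z x.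
Proof.
apply: eq_in_all => p; rewrite mem_iota add0n => /andP [_ pz].
by case pr: (prime p) => //=; rewrite dvdF_shift // Mz_dvd.
Qed.

Lemma good_shiftk z x k : good z (x + Mz z * k) = good z x.
Proof. by elim: k => [|k IH]; rewrite ?muln0 ?addn0 // mulnS addnA addnC addnA [_ + x]addnC good_shift. Qed.

Lemma count_sum (a : pred nat) n : count a (iota 0 n) = \sum_(0 <= i < n) a i.
Proof. by rewrite -sum1_count big_mkcond /index_iota subn0. Qed.

Lemma sum_shift (h : nat -> nat) a n : \sum_(a <= i < a + n) h i = \sum_(0 <= i < n) h (i + a).
Proof. by rewrite -{1}[a]add0n big_addn addKn. Qed.

Lemma sum_blocks (h : nat -> nat) M q :
  \sum_(0 <= d < M * q) h d = \sum_(0 <= t < q) \sum_(0 <= a < M) h (a + M * t).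
Proof.
elim: q => [|q IH]; first by rewrite muln0 !big_geq.
rewrite big_nat_recr //= -IH mulnS addnC (big_cat_nat (leq0n (M * q)) (leq_addr M (M * q))) /=.
by rewrite sum_shift.
Qed.

Lemma mod_cancel q M a t1 t2 : coprime q M -> t1 < q -> t2 < q ->
  (a + M * t1) %% q = (a + M * t2) %% q -> t1 = t2.
Proof.
move=> co l1 l2 /eqP; rewrite eqn_modDl.
wlog le: t1 t2 l1 l2 / t2 <= t1.
  move=> W E; case: (leqP t2 t1) => h; first exact: W.
  by symmetry; apply: W => //; [apply: ltnW | rewrite eq_sym].
rewrite eqn_mod_dvd ?leq_mul2l ?le ?orbT // -mulnBr Gauss_dvdr // => D.
have : t1 - t2 < q by apply: leq_ltn_trans l1; apply: leq_subr.
case E0 : (t1 - t2) => [|k]; first by move=> _; apply/eqP; rewrite eqn_leq le -subn_eq0 E0.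
move=> lt; rewrite E0 in D; have := dvdn_leq (isT : 0 < k.+1) D; lia.
Qed.

Lemma sum_delta q M a : 0 < q -> coprime q M ->
  \sum_(0 <= t < q) (q %| F (a + M * t)) = delta q.
Proof.
move=> q0 co; rewrite big_mkord.
pose h := fun t : 'I_q => Ordinal (ltn_pmod (a + M * t) q0).
have inj : injective h.
  move=> t1 t2 /(congr1 val) /= E; apply: val_inj.
  exact: (@mod_cancel q M a t1 t2 co (ltn_ord t1) (ltn_ord t2) E).
rewrite (eq_bigr (fun t : 'I_q => nat_of_bool (q %| F (h t)))); last by move=> t _; rewrite /= -dvdF_mod.
rewrite -(reindex_inj (P := xpredT) (F := fun r : 'I_q => nat_of_bool (q %| F r)) inj).
rewrite /delta -sum1_card [RHS]big_mkcond /=; apply: eq_bigr => i _; rewrite inE.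
by [].
Qed.

Lemma sum_ndelta q M a : 0 < q -> coprime q M ->
  \sum_(0 <= t < q) ~~ (q %| F (a + M * t)) = q - delta q.
Proof.
move=> q0 co.
have H : \sum_(0 <= t < q) ((q %| F (a + M * t)) + ~~ (q %| F (a + M * t))) = q.
  rewrite (eq_bigr (fun _ => 1)) ?sum_nat_const_nat ?subn0 ?muln1 //.
  by move=> i _; case: (_ %| _).
rewrite big_split /= sum_delta // in H.
move: H; set s := \sum_(_ <= _ < _) _ => H.
have -> : q - delta q = (delta q + s) - delta q by rewrite H.
by rewrite addKn.
Qed.

Lemma coprime_Mz z : prime z -> coprime (z^2) (Mz z).
Proof.
move=> pz; suff: forall n, n <= z -> coprime (z^2) (Mz n) by apply.
elim=> [|n IH] lt.
  have -> : Mz 0 = 1 by rewrite /Mz big_geq.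
  exact: coprimen1.
have -> : Mz n.+1 = Mz n * gp n by rewrite /Mz big_nat_recr.
rewrite coprimeMr IH ?(ltnW lt) // /gp; case: ifP => pn; last exact: coprimen1.
by rewrite coprimeXl // coprimeXr // prime_coprime // dvdn_prime2 // gtn_eqF.
Qed.

Lemma cnt_good z : \sum_(0 <= d < Mz z) good z d = Qz z.
Proof.
elim: z => [|z IH].
  have -> : Mz 0 = 1 by rewrite /Mz big_geq.
  by rewrite /Qz [RHS]big_geq // big_nat1.
have MS : Mz z.+1 = Mz z * gp z by rewrite /Mz big_nat_recr.
have QS : Qz z.+1 = Qz z * gq z by rewrite /Qz big_nat_recr.
rewrite MS QS /gp /gq; case: ifP => pz; last first.
  rewrite !muln1 -IH; apply: eq_bigr => d _; by rewrite goodS pz andbT.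
rewrite sum_blocks.
rewrite (eq_bigr (fun t => \sum_(0 <= a < Mz z) (good z a * ~~ (z^2 %| F (a + Mz z * t))))); last first.
  move=> t _; apply: eq_bigr => a _; by rewrite goodS good_shiftk pz mulnb.
rewrite exchange_big /= -IH big_distrl /=; apply: eq_bigr => a _.
by rewrite -big_distrr /= sum_ndelta ?coprime_Mz // expn_gt0 prime_gt0.
Qed.
End NT.

Section NT2.
Local Open Scope nat_scope.

Lemma sum_period (h : nat -> nat) M s : (forall x, h (x + M) = h x) ->
  \sum_(s <= d < s + M) h d = \sum_(0 <= d < M) h d.
Proof.
move=> hp; elim: s => [|s IH]; first by rewrite add0n.
case: M hp IH => [|M] hp IH; first by rewrite addn0 !big_geq.
have e1 : s.+1 + M.+1 = (s.+1 + M).+1 by rewrite addnS.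
have e2 : s + M.+1 = s.+1 + M by rewrite addnS addSn.
rewrite -IH e1 e2 big_nat_recr ?leq_addr // (big_ltn (m:=s)) ?ltnS ?leq_addr //.
rewrite -e2 hp; exact: addnC.
Qed.

Lemma sum_period_k (h : nat -> nat) M s k : (forall x, h (x + M) = h x) ->
  \sum_(s <= d < s + M * k) h d = k * \sum_(0 <= d < M) h d.
Proof.
move=> hp; elim: k => [|k IH]; first by rewrite muln0 addn0 big_geq.
rewrite mulnS [M + _]addnC addnA (big_cat_nat (leq_addr (M * k) s) (leq_addr M _)) /=.
by rewrite IH sum_period // mulSn addnC.
Qed.

Lemma sum_mono (h : nat -> nat) s a b : s <= a -> a <= b ->
  \sum_(s <= d < a) h d <= \sum_(s <= d < b) h d.
Proof. by move=> sa ab; rewrite [X in _ <= X](big_cat_nat sa ab) leq_addr. Qed.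

Definition Gz z N := \sum_(1 <= d < N.+1) good z d.

Lemma sum_good_M z : \sum_(0 <= d < Mz z) good z d = Qz z.
Proof. exact: cnt_good. Qed.

Lemma G_lower z N : (N %/ Mz z) * Qz z <= Gz z N.
Proof.
rewrite /Gz -sum_good_M -(sum_period_k (fun d => nat_of_bool (good z d)) (Mz z) 1 (N %/ Mz z)); last by move=> x; rewrite good_shift.
apply: sum_mono => //; rewrite add1n ltnS mulnC; exact: leq_trunc_div.
Qed.

Lemma G_upper z N : Gz z N <= (N %/ Mz z).+1 * Qz z.
Proof.
rewrite /Gz -sum_good_M -(sum_period_k (fun d => nat_of_bool (good z d)) (Mz z) 1 (N %/ Mz z).+1); last by move=> x; rewrite good_shift.
apply: sum_mono => //; rewrite add1n ltnS mulnC; apply: ltnW; exact: ltn_ceil (Mz_gt0 z).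
Qed.

Definition SQ N := \sum_(1 <= d < N.+1) squarefree (F d).

Lemma SQ_eq N : sqfree_count N = SQ N.
Proof. by rewrite /sqfree_count /SQ -sum1_count big_mkcond /index_iota subSS subn0. Qed.

Lemma sqf_nodiv n p : squarefree n -> prime p -> ~~ (p^2 %| n).
Proof.
case/andP=> n0 /forallP H pr; apply/negP=> D.
have le : p ^ 2 <= n by apply: dvdn_leq.
have pn : p < n.+1 by rewrite ltnS; apply: leq_trans le; rewrite -mulnn leq_pmulr // prime_gt0.
by have := H (Ordinal pn); rewrite /= prime_gt1 // D.
Qed.

Lemma not_sqf n : 0 < n -> ~~ squarefree n -> exists2 p, prime p & p^2 %| n.
Proof.
move=> n0; rewrite /squarefree n0 /= negb_forall => /existsP [k].
rewrite negb_imply negbK => /andP [k1 D].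
exists (pdiv k); first exact: pdiv_prime.
by apply: dvdn_trans D; apply: dvdn_exp2r; apply: pdiv_dvd.
Qed.

Lemma SQ_le_G z N : SQ N <= Gz z N.
Proof.
apply: leq_sum => d _; case: (boolP (squarefree (F d))) => // H.
rewrite /good (_ : all _ _ = true) //; apply/allP => p _; apply/implyP => pr.
exact: sqf_nodiv.
Qed.

Definition cp N p := \sum_(1 <= d < N.+1) (prime p && (p^2 %| F d)).

Lemma F_gt0 d : 0 < F d.
Proof. by rewrite /F addn_gt0 orbT. Qed.

Lemma p_le_sq p : 0 < p -> p <= p ^ 2.
Proof. by move=> p0; rewrite -mulnn leq_pmulr. Qed.

Lemma G_le z N : Gz z N <= SQ N + \sum_(z <= p < N ^ 4 + 3) cp N p.
Proof.
rewrite /cp exchange_big /= /Gz /SQ -big_split /= big_seq [X in _ <= X]big_seq.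
apply: leq_sum => d; rewrite mem_index_iota => /andP [d1 dN].
case: (boolP (squarefree (F d))) => H; first exact: leq_trans (leq_b1 _) (leq_addr _ _).
have [p pr D] := @not_sqf (F d) (F_gt0 d) H.
case: (boolP (good z d)) => // gd.
have pz : z <= p.
  rewrite leqNgt; apply/negP => pz; move: gd; rewrite /good => /allP /(_ p).
  by rewrite mem_iota add0n pz pr D => /(_ isT).
have pB : p < N ^ 4 + 3.
  apply: (@leq_ltn_trans (F d)); last first.
    rewrite /F; apply: (@leq_ltn_trans (N^4 + 2)); first by rewrite leq_add2r leq_exp2r // -ltnS.
    by rewrite ltn_add2l.
  apply: leq_trans (dvdn_leq (F_gt0 d) D); exact: p_le_sq (prime_gt0 pr).
rewrite (bigD1_seq p) ?mem_index_iota ?pz ?pB ?iota_uniq //= pr D /=.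
by rewrite add0n add1n.
Qed.

Lemma sum_deltaq q : 0 < q -> \sum_(0 <= d < q) (q %| F d) = delta q.
Proof.
move=> q0; rewrite -(@sum_delta q 1 0) ?coprimen1 //.
by apply: eq_bigr => t _; rewrite add0n mul1n.
Qed.

Lemma cp_le N p : cp N p <= (N %/ p^2).+1 * 4.
Proof.
rewrite /cp; case: (boolP (prime p)) => pr; last by rewrite big1.
set q := p ^ 2.
have q0 : 0 < q by rewrite expn_gt0 prime_gt0.
apply: (@leq_trans (\sum_(1 <= d < 1 + q * (N %/ q).+1) (q %| F d))).
  apply: sum_mono => //; rewrite add1n ltnS mulnC; exact: ltnW (ltn_ceil N q0).
rewrite sum_period_k; last by move=> x; rewrite dvdF_shift.
by rewrite leq_mul2l sum_deltaq // delta_le4 // orbT.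
Qed.

Lemma cp_pos N p : 0 < cp N p -> prime p /\ exists d, [/\ 0 < d, d <= N & p ^ 2 %| F d].
Proof.
move=> H; case: (pselect (exists d, [/\ 0 < d, d <= N & prime p && (p ^ 2 %| F d)])).
  by case=> d [d0 dN /andP [pr D]]; split => //; exists d.
move=> nE; exfalso; move: H; rewrite /cp big1_seq ?ltnn // => d.
rewrite mem_index_iota => /andP [_ /andP [d1 dN]].
case E : (prime p && _) => //; exfalso; apply: nE; exists d; split => //.
Qed.

Lemma cp_big N p : N < p ^ 2 -> cp N p <= 4 * (0 < cp N p).
Proof.
move=> lt; case: (posnP (cp N p)) => [-> //|_]; rewrite muln1.
by have := cp_le N p; rewrite divn_small // mul1n.
Qed.

Lemma cp_split N p : cp N p <= (p ^ 2 <= N) * ((N %/ p^2).+1 * 4) + 4 * (0 < cp N p).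
Proof.
case: (leqP (p ^ 2) N) => h /=; first by rewrite mul1n; apply: leq_trans (cp_le N p) (leq_addr _ _).
by rewrite mul0n add0n cp_big.
Qed.

End NT2.

Lemma G_le2 z N : (Gz z N <= SQ N + \sum_(z <= p < N ^ 4 + 3) (p ^ 2 <= N) * ((N %/ p ^ 2).+1 * 4)
   + 4 * \sum_(0 <= p < N ^ 4 + 3) (0 < cp N p))%N.
Proof.
apply: leq_trans (G_le z N) _; rewrite -addnA leq_add2l.
apply: (@leq_trans (\sum_(z <= p < N^4+3) ((p^2 <= N) * ((N %/ p^2).+1 * 4) + 4 * (0 < cp N p)))).
  by apply: leq_sum => p _; apply: cp_split.
rewrite big_split /= leq_add2l -big_distrr /= leq_mul2l /=.
case: (leqP z (N ^ 4 + 3)) => zB.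
  by rewrite [X in (_ <= X)%N](big_cat_nat (leq0n z) zB) leq_addl.
by rewrite big_geq // ltnW.
Qed.

Section Real.
Variable R : realType.

Definition fac (p : nat) : R := if prime p then 1 - (delta (p ^ 2)%N)%:R / ((p ^ 2)%N)%:R else 1.
Definition Pr (z : nat) : R := \prod_(0 <= p < z) fac p.

Lemma Pr_eq z : \prod_(p < z | prime p) (1 - (delta (p ^ 2)%N)%:R / ((p ^ 2)%N)%:R : R) = Pr z.
Proof. by rewrite /Pr big_mkord big_mkcond /=; apply: eq_bigr => i _; rewrite /fac. Qed.

Lemma Pr_S z : Pr z.+1 = Pr z * fac z.
Proof. by rewrite /Pr big_nat_recr. Qed.

Lemma sq_gt0 p : prime p -> (0 < ((p ^ 2)%N)%:R :> R).
Proof. by move=> pr; rewrite ltr0n expn_gt0 prime_gt0. Qed.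

Lemma PQ z : (Qz z)%:R / (Mz z)%:R = Pr z.
Proof.
rewrite /Qz /Mz !natr_prod -prodf_div; apply: eq_bigr => p _.
rewrite /gq /gp /fac; case: ifP => pr; last by rewrite divr1.
rewrite natrB; last by rewrite -[X in (_ <= X)%N]card_ord max_card.
by rewrite mulrBl divff // gt_eqF // sq_gt0.
Qed.

Lemma fac_le1 p : fac p <= 1.
Proof.
by rewrite /fac; case: ifP => // pr; rewrite lerBlDr lerDl.
Qed.

Lemma fac_ge p : (3 <= p)%N -> 1 - 4 / ((p ^ 2)%N)%:R <= fac p.
Proof.
move=> p3; rewrite /fac; case: ifP => pr.
  rewrite lerB // ler_pM2r ?invr_gt0 ?sq_gt0 //.
  by rewrite ler_nat delta_le4.
rewrite lerBlDr lerDl divr_ge0 // ler0n.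
Qed.

Lemma fac_ge0 p : 0 <= fac p.
Proof.
rewrite /fac; case: ifP => // pr.
have [->|p2] := eqVneq p 2%N; first by rewrite delta4 mul0r subr0.
have p3 : (3 <= p)%N by have := prime_gt1 pr; rewrite leq_eqVlt eq_sym (negbTE p2).
have := @fac_ge p p3; rewrite /fac pr; apply: le_trans.
rewrite subr_ge0 ler_pdivrMr ?mul1r; last by rewrite ltr0n expn_gt0; case: (p) p3.
rewrite ler_nat -mulnn.
by apply: leq_trans (leq_mul p3 p3).
Qed.

Lemma Pr_ge0 z : 0 <= Pr z.
Proof. elim: z => [|z IH]; first by rewrite /Pr big_geq. by rewrite Pr_S mulr_ge0 // fac_ge0. Qed.

Lemma Pr_noninc z : Pr z.+1 <= Pr z.
Proof. by rewrite Pr_S ler_piMr ?Pr_ge0 ?fac_le1. Qed.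

Lemma Pr_mono m n : (m <= n)%N -> Pr n <= Pr m.
Proof.
move=> /subnK <-; elim: (n - m)%N => [|k IH]; rewrite ?add0n //.
by rewrite addSn; apply: le_trans (Pr_noninc _) IH.
Qed.

Lemma Pr3 : Pr 3 = 1.
Proof.
rewrite /Pr !big_nat_recr //= big_geq // /fac /=.
by rewrite delta4 mul0r subr0 !mulr1.
Qed.

Definition Bd (k : nat) : R := (k%:R + 3) * (k%:R + 4) / (6 * (k%:R + 2) * (k%:R + 1)).

Lemma Bd_ge0 k : 0 <= Bd k.
Proof. by rewrite /Bd divr_ge0 // ?mulr_ge0 // ?addr_ge0 // ler0n. Qed.

Lemma Bd_step k : Bd k * (1 - 4 / (((k + 3) ^ 2)%N)%:R) = Bd k.+1.
Proof.
rewrite /Bd natrX natrD -[k.+1]addn1 natrD.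
have x0 : 0 <= k%:R :> R by rewrite ler0n.
field; rewrite !gt_eqF //; lra.
Qed.

Lemma Pr_lb k : Bd k <= Pr (k + 3).
Proof.
elim: k => [|k IH].
  have -> : Bd 0 = 1 by rewrite /Bd; field.
  by rewrite add0n Pr3.
rewrite addSn Pr_S -Bd_step.
apply: (@le_trans _ _ (Bd k * fac (k + 3))).
  by rewrite ler_wpM2l ?Bd_ge0 // fac_ge // leq_addl.
by rewrite ler_wpM2r ?fac_ge0.
Qed.

Lemma Pr_ge z : 1 / 6 <= Pr z.
Proof.
have B16 k : 1 / 6 <= Bd k.
  have x0 : 0 <= k%:R :> R by rewrite ler0n.
  have d0 : 0 < 6 * (k%:R + 2) * (k%:R + 1) :> R by nra.
  rewrite /Bd ler_pdivrMr // mulrAC ler_pdivlMr //; nra.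
case: (leqP 3 z) => z3.
  by rewrite -(subnK z3); apply: le_trans (B16 (z - 3)%N) (Pr_lb _).
apply: (@le_trans _ _ (Pr 3)); first by rewrite Pr3; lra.
by apply: Pr_mono; apply: ltnW.
Qed.


Lemma step_ineq (y : R) : 0 < y -> 1 / (y + 1) ^+ 2 + 1 / (y + 1) <= 1 / y.
Proof.
move=> y0.
have E : 1 / y - (1 / (y + 1) ^+ 2 + 1 / (y + 1)) = 1 / (y * (y + 1) ^+ 2).
  by field; rewrite !gt_eqF //; lra.
rewrite -subr_ge0 E divr_ge0 //; apply: mulr_ge0; [lra | apply: exprn_ge0; lra].
Qed.

Lemma tail_sum w m : \sum_(w.+2 <= p < w.+2 + m) 1 / ((p ^ 2)%N)%:R + 1 / (w + m + 1)%:R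
   <= 1 / (w + 1)%:R :> R.
Proof.
elim: m => [|m IH]; first by rewrite !addn0 big_geq // add0r.
rewrite addnS big_nat_recr ?leq_addr //=.
apply: le_trans IH; rewrite -addrA lerD2l.
have -> : (w.+2 + m = (w + m + 1) + 1)%N by rewrite !addn1 !addSn.
have -> : (w + m.+1 + 1 = (w + m + 1) + 1)%N by rewrite !addn1 addnS.
rewrite natrX !(natrD _ (w + m + 1)%N 1).
by apply: step_ineq; rewrite ltr0n addn1.
Qed.

Lemma tail_bound z n : (2 <= z)%N -> \sum_(z <= p < n) 1 / ((p ^ 2)%N)%:R <= 1 / (z.-1)%:R :> R.
Proof.
move=> z2; case: (leqP z n) => zn; last first.
  by rewrite big_geq ?(ltnW zn) // divr_ge0 ?ler01 ?ler0n.
have [w Ez] : exists w, z = w.+2 by exists (z - 2)%N; rewrite -addn2 subnK.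
subst z.
have [m Em] : exists m, n = (w.+2 + m)%N by exists (n - w.+2)%N; rewrite subnKC.
subst n.
have H := tail_sum w m.
have h0 : 0 <= 1 / (w + m + 1)%:R :> R by rewrite divr_ge0 ?ler01 ?ler0n.
have -> : (w.+2.-1 = w + 1)%N by rewrite addn1.
lra.
Qed.

Lemma term_bound q N : (0 < q)%N -> (q <= N)%N -> ((N %/ q).+1 * 4)%:R <= 8 * N%:R / q%:R :> R.
Proof.
move=> q0 qN; rewrite ler_pdivlMr ?ltr0n // -!natrM ler_nat.
have h1 := leq_trunc_div N q.
rewrite mulnAC mulSn; set t := (N %/ q * q)%N in h1 *; lia.
Qed.

Lemma a_bound z N : (2 <= z)%N ->
  ((\sum_(z <= p < N ^ 4 + 3) (p ^ 2 <= N) * ((N %/ p ^ 2).+1 * 4))%N)%:R <= 8 * N%:R / (z.-1)%:R :> R.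
Proof.
move=> z2; rewrite natr_sum.
apply: (@le_trans _ _ (\sum_(z <= p < N ^ 4 + 3) 8 * N%:R * (1 / ((p ^ 2)%N)%:R))).
  rewrite big_seq [X in _ <= X]big_seq; apply: ler_sum => p; rewrite mem_index_iota => /andP [zp _].
  have p0 : (0 < p ^ 2)%N by rewrite expn_gt0; lia.
  case: (leqP (p ^ 2) N) => h; last by rewrite mul0n mulr_ge0 // ?divr_ge0 // ?mulr_ge0 // ler0n.
  by rewrite mul1n mulrA mulr1; apply: term_bound.
rewrite -mulr_sumr (_ : 8 * N%:R / (z.-1)%:R = 8 * N%:R * (1 / (z.-1)%:R)); last by rewrite mulrA mulr1.
by rewrite ler_wpM2l ?mulr_ge0 ?ler0n ?tail_bound.
Qed.


Lemma s2_inS2 N p : (0 < cp N p)%N -> inS2 (N%:R : R) p.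
Proof.
case/cp_pos => pr [d [d0 dN D]].
rewrite /inS2 pr /= /Rf.
have Hd : Rf_at (p ^ 2) d.
  rewrite /Rf_at; apply/orP; left.
  rewrite (_ : f d%:Z = ((d ^ 4 + 2)%N)%:Z); last first.
    rewrite /f -[RHS]natz natrD natrX; congr (_ ^+ _ + _); symmetry; exact: natz.
  by rewrite dvdzE /=.
case: pselect => [h|h]; last by exfalso; apply: h; exists d.
case: ex_minnP => m Hm Hmin; rewrite ler_nat.
exact: leq_trans (Hmin d Hd) dN.
Qed.

Lemma s2_bound N : ((\sum_(0 <= p < N ^ 4 + 3) (0 < cp N p))%N)%:R <= (S2card (N%:R : R))%:R :> R.
Proof.
rewrite ler_nat /S2card natrK -sum1_card [X in (_ <= X)%N]big_mkcond /= big_mkord.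
apply: leq_sum => p _; rewrite inE.
case: (posnP (cp N p)) => // h.
by rewrite (@s2_inS2 N p h).
Qed.


Lemma QMP z : (Qz z)%:R = (Mz z)%:R * Pr z :> R.
Proof. by rewrite -(PQ z) mulrC divfK // gt_eqF // ltr0n Mz_gt0. Qed.

Lemma key_upper z N : (0 < N)%N -> (SQ N)%:R / N%:R <= Pr z + (Qz z)%:R / N%:R :> R.
Proof.
move=> N0.
have n0 : 0 < N%:R :> R by rewrite ltr0n.
have P0 := Pr_ge0 z.
have EQ := QMP z.
have kM : (N %/ Mz z)%:R * (Mz z)%:R <= N%:R :> R by rewrite -natrM ler_nat leq_trunc_div.
have SG : (SQ N)%:R <= ((N %/ Mz z)%:R + 1) * (Qz z)%:R :> R.
  have : (SQ N <= (N %/ Mz z).+1 * Qz z)%N by apply: leq_trans (SQ_le_G z N) (G_upper z N).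
  by rewrite -(ler_nat R) natrM -addn1 natrD.
rewrite ler_pdivrMr // mulrDl divfK ?gt_eqF //.
rewrite EQ in SG *; nra.
Qed.

Lemma key_lower z N : (0 < N)%N -> (2 <= z)%N ->
  Pr z - (Qz z)%:R / N%:R - 8 / (z.-1)%:R - 4 * ((S2card (N%:R : R))%:R / N%:R) <= (SQ N)%:R / N%:R :> R.
Proof.
move=> N0 z2.
have n0 : 0 < N%:R :> R by rewrite ltr0n.
have z0 : 0 < (z.-1)%:R :> R by rewrite ltr0n; case: z z2 => [|[|z]].
have P0 := Pr_ge0 z.
have EQ := QMP z.
have kM : N%:R <= ((N %/ Mz z)%:R + 1) * (Mz z)%:R :> R.
  rewrite natr1 -natrM ler_nat; apply: ltnW; exact: ltn_ceil (Mz_gt0 z).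
have GL : (N %/ Mz z)%:R * (Qz z)%:R <= (Gz z N)%:R :> R by rewrite -natrM ler_nat G_lower.
have GU : (Gz z N)%:R <= (SQ N)%:R + 8 * N%:R / (z.-1)%:R + 4 * (S2card (N%:R : R))%:R :> R.
  have H := G_le2 z N; rewrite -(ler_nat R) natrD natrM natrD in H.
  apply: (le_trans H); apply: lerD; first by apply: lerD => //; exact: a_bound.
  by rewrite ler_pM2l ?ltr0n // s2_bound.
rewrite ler_pdivlMr //.
have -> : (Pr z - (Qz z)%:R / N%:R - 8 / (z.-1)%:R - 4 * ((S2card (N%:R : R))%:R / N%:R)) * N%:R
   = Pr z * N%:R - (Qz z)%:R - 8 * N%:R / (z.-1)%:R - 4 * (S2card (N%:R : R))%:R.
  by field; rewrite !gt_eqF.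
rewrite EQ in GL *; nra.
Qed.

End Real.

Lemma small_tail (R : realType) (e : R) z : 0 < e -> 32 / e + 2 <= z%:R -> 8 / (z.-1)%:R < e / 4.
Proof.
move=> e0 hz.
have w0 : 0 <= 32 / e by rewrite divr_ge0 // ?ltW.
have z1 : (1 <= z)%N by case: z hz => [|z] // hz; exfalso; lra.
have Ez : (z.-1)%:R = z%:R - 1 :> R by rewrite -[in RHS](prednK z1) -natr1 addrK.
have ew : e * (32 / e) = 32 by rewrite mulrC divfK ?gt_eqF.
have t0 : 0 < (z.-1)%:R :> R by rewrite Ez; lra.
rewrite ltr_pdivrMr // mulrAC ltr_pdivlMr //.
rewrite Ez; rewrite Ez in t0; nra.
Qed.

Lemma small_Q (R : realType) (e Q n : R) : 0 < e -> 0 <= Q -> 4 * Q / e + 1 <= n -> Q / n < e / 4.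
Proof.
move=> e0 Q0 hn.
have w0 : 0 <= 4 * Q / e by rewrite divr_ge0 ?mulr_ge0 // ?ltW.
have n0 : 0 < n by lra.
have ew : e * (4 * Q / e) = 4 * Q by rewrite mulrC divfK ?gt_eqF.
rewrite ltr_pdivrMr // mulrAC ltr_pdivlMr //; nra.
Qed.

Theorem theorem3 (R : realType) :
  ((S2card T)%:R / T : R) @[T --> +oo%R] --> (0 : R) ->
  exists c : R,
    [/\ (fun N : nat => (sqfree_count N)%:R / N%:R : R) @ \oo --> c,
        0 < c &
        (fun N : nat => \prod_(p < N | prime p)
            (1 - (delta (p ^ 2)%N)%:R / ((p ^ 2)%N)%:R : R)) @ \oo --> c].
Proof.
move=> hyp.
pose u := fun z : nat => Pr R z.
have u_ni : nonincreasing_seq u by apply/nonincreasing_seqP => n; exact: Pr_noninc.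
have u_lb : has_lbound (range u) by exists (1/6) => _ [z _ <-]; exact: Pr_ge.
have u_cvg : cvgn u := nonincreasing_is_cvgn u_ni u_lb.
have c_le z : limn u <= Pr R z := nonincreasing_cvgn_ge u_ni u_cvg z.
have c_ge : 1 / 6 <= limn u.
  apply: limr_ge => //; near=> z; exact: Pr_ge.
exists (limn u); split; last first.
- have -> : (fun N : nat => \prod_(p < N | prime p)
            (1 - (delta (p ^ 2)%N)%:R / ((p ^ 2)%N)%:R : R)) = u.
    by apply: funext => N; rewrite Pr_eq.
  exact: u_cvg.
- apply: lt_le_trans c_ge; lra.
have hypn : (fun N : nat => (S2card (N%:R : R))%:R / N%:R) @ \oo --> (0 : R).
  exact: (cvg_comp _ _ cvgr_idn hyp).
have -> : (fun N : nat => (sqfree_count N)%:R / N%:R : R) = (fun N : nat => (SQ N)%:R / N%:R).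
  by apply: funext => N; rewrite SQ_eq.
apply/cvgrPdist_lt => e e0.
have e4 : 0 < e / 4 by rewrite divr_gt0.
have e16 : 0 < e / 16 by rewrite divr_gt0.
have H1 : \forall t \near \oo, `|limn u - u t| < e / 4 by move/cvgrPdist_lt: u_cvg; apply.
have : \forall z \near \oo, [/\ (2 <= z)%N, `|limn u - u z| < e / 4 & 32 / e + 2 <= z%:R].
  near=> z; split.
  - near: z; exact: nbhs_infty_ge.
  - near: z; exact: H1.
  - near: z; exact: nbhs_infty_ger.
move/filter_ex => [z [z2 zc zr]].
have zt := @small_tail R e z e0 zr.
have H2 : \forall t \near \oo, `|0 - (S2card ((t:nat)%:R : R))%:R / (t:nat)%:R| < e / 16 by move/cvgrPdist_lt: hypn; apply.
near=> N.
have N0 : (0 < N)%N by near: N; exact: nbhs_infty_gt.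
have hQ : (Qz z)%:R / N%:R < e / 4 :> R.
  apply: (@small_Q R e (Qz z)%:R N%:R e0 (ler0n _ _)).
  near: N; exact: nbhs_infty_ger.
have hS : `|0 - (S2card (N%:R : R))%:R / N%:R| < e / 16 by near: N; exact: H2.
have Sx := ler_norm ((S2card (N%:R : R))%:R / N%:R : R).
rewrite sub0r normrN in hS.
have U := @key_upper R z N N0.
have L := @key_lower R z N N0 z2.
have cz := c_le z.
rewrite /u in zc; have zc' := ler_norm (limn u - Pr R z).
have zc'' : `|limn u - Pr R z| = Pr R z - limn u by rewrite distrC ger0_norm // subr_ge0.
rewrite zc'' in zc.
rewrite ltr_norml; apply/andP; split; lra.
Unshelve. all: end_near.
Qed.
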